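(* Let $k_1,k_2\ge1$ be integers. Then $\mathcal{J}^{12}_{[-1,\infty),[0,\infty)}=\mathcal{J}^{12}_{[0,\infty),[-1,\infty)}=\mathcal{J}^{12}_{[0,\infty),[0,\infty)}$.
   Context: $\mathcal{F}$ is the free $\mathbb{Z}[A^{\pm1}]$-module with basis the symbols $s_1^{l_1}s_2^{l_2}s_3^{l_3}$, $l_i\ge 0$, extended multilinearly to integer exponents by $s_i^{-1}=0$ and $s_i^{n}=-s_i^{-n-2}$ for $n\le -2$. For $n_i\in\mathbb{Z}$, $R_{12}(n_1,n_2,n_3)=-A^{-n_1-n_2-2}s_1^{n_1}s_2^{n_2}s_3^{n_3}-A^{-n_1-n_2+2}s_1^{n_1-2}s_2^{n_2-2}s_3^{n_3}-A^{-n_1-n_2}s_1^{n_1-1}s_2^{n_2-1}s_3^{n_3+1}-A^{-n_1-n_2}s_1^{n_1-1}s_2^{n_2-1}s_3^{n_3-1}$ and $R_{12}^{n_1,n_2,n_3}=R_{12}(n_1,n_2,n_3)-R_{12}(-n_1+k_1,-n_2+k_2,n_3)$. For $I_1,I_2\subseteq\mathbb{R}$, $\mathcal{J}^{12}_{I_1,I_2}$ is the submodule of $\mathcal{F}$ generated by $\{R^{n_1,n_2,n_3}_{12}: n_1\in I_1\cap\mathbb{Z},\ n_2\in I_2\cap\mathbb{Z},\ n_3\in\mathbb{Z}_{\ge0}\}$. *)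

(* Defs.v *)
From Stdlib Require Import ZArith.
Open Scope Z_scope.

(* The module F = free Z[A^{+-1}]-module with basis s1^l1 s2^l2 s3^l3 (l_i >= 0).
   As a Z-module it is free on A^m s1^l1 s2^l2 s3^l3 (m : Z); an element is
   represented by its coefficient function  f l1 l2 l3 m  = coefficient of
   A^m s1^l1 s2^l2 s3^l3 (only finitely supported elements arise below). *)
Definition F := nat -> nat -> nat -> Z -> Z.

Definition Fzero : F := fun _ _ _ _ => 0.
Definition Fadd (f g : F) : F := fun l1 l2 l3 m => f l1 l2 l3 m + g l1 l2 l3 m.
Definition Fopp (f : F) : F := fun l1 l2 l3 m => - f l1 l2 l3 m.
Definition Fshift (k : Z) (f : F) : F := fun l1 l2 l3 m => f l1 l2 l3 (m - k).

(* Extension to integer exponents: s^n = s^n (n >= 0), s^{-1} = 0,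
   s^n = - s^{-n-2} (n <= -2).  sgn_ext gives the sign, idx_ext the exponent. *)
Definition sgn_ext (n : Z) : Z :=
  if 0 <=? n then 1 else if n =? -1 then 0 else -1.
Definition idx_ext (n : Z) : nat :=
  if 0 <=? n then Z.to_nat n else Z.to_nat (- n - 2).

Definition term (c e n1 n2 n3 : Z) : F :=
  fun l1 l2 l3 m =>
    if (Nat.eqb l1 (idx_ext n1) && Nat.eqb l2 (idx_ext n2)
        && Nat.eqb l3 (idx_ext n3) && Z.eqb m e)%bool
    then c * sgn_ext n1 * sgn_ext n2 * sgn_ext n3 else 0.

Definition R12 (n1 n2 n3 : Z) : F :=
  Fadd (term (-1) (- n1 - n2 - 2) n1 n2 n3)
  (Fadd (term (-1) (- n1 - n2 + 2) (n1 - 2) (n2 - 2) n3)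
  (Fadd (term (-1) (- n1 - n2) (n1 - 1) (n2 - 1) (n3 + 1))
        (term (-1) (- n1 - n2) (n1 - 1) (n2 - 1) (n3 - 1)))).

Definition R12k (k1 k2 n1 n2 n3 : Z) : F :=
  Fadd (R12 n1 n2 n3) (Fopp (R12 (- n1 + k1) (- n2 + k2) n3)).

(* Z[A^{+-1}]-submodule generated by G: closure under 0, +, -, and
   multiplication by A and A^{-1} (these generate the Laurent ring action),
   and (for convenience) extensional equality of coefficient functions. *)
Inductive span (G : F -> Prop) : F -> Prop :=
| span_gen f : G f -> span G f
| span_zero : span G Fzero
| span_add f g : span G f -> span G g -> span G (Fadd f g)
| span_opp f : span G f -> span G (Fopp f)
| span_shift k f : span G f -> span G (Fshift k f)
| span_ext f g : (forall l1 l2 l3 m, f l1 l2 l3 m = g l1 l2 l3 m) ->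
                 span G f -> span G g.

Definition J12 (k1 k2 : Z) (I1 I2 : Z -> Prop) : F -> Prop :=
  span (fun v => exists n1 n2 n3, I1 n1 /\ I2 n2 /\ 0 <= n3 /\
                   v = R12k k1 k2 n1 n2 n3).

Definition same_submodule (M N : F -> Prop) : Prop := forall v, M v <-> N v.

(* Main.v *)
Require Import Defs.
From Stdlib Require Import ZArith Lia.
Open Scope Z_scope.

Definition D (n : Z) (l : nat) : Z := if Nat.eqb l (idx_ext n) then sgn_ext n else 0.
Definition E (e m : Z) : Z := if Z.eqb m e then 1 else 0.

Lemma term_eval c e n1 n2 n3 l1 l2 l3 m :
  term c e n1 n2 n3 l1 l2 l3 m = c * D n1 l1 * D n2 l2 * D n3 l3 * E e m.
Proof.
  unfold term, D, E.
  destruct (Nat.eqb l1 _), (Nat.eqb l2 _), (Nat.eqb l3 _), (Z.eqb m e); simpl; ring.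
Qed.

Lemma D_m1' x l : x = -1 -> D x l = 0.
Proof. intros ->. unfold D. simpl. destruct (Nat.eqb l _); reflexivity. Qed.

Lemma D_eq y x l : y = x -> D y l = D x l.
Proof. intros ->; reflexivity. Qed.

Lemma E_eq y x m : y = x -> E y m = E x m.
Proof. intros ->; reflexivity. Qed.

Lemma E_shift e x k : E e (x - k) = E (e + k) x.
Proof.
  unfold E. destruct (Z.eqb_spec (x - k) e), (Z.eqb_spec x (e + k)); lia.
Qed.

Lemma D_refl y x l : y = -x - 2 -> D y l = - D x l.
Proof.
  intros ->. unfold D, idx_ext, sgn_ext.
  destruct (Z.leb_spec 0 x), (Z.leb_spec 0 (-x-2)); try lia.
  - replace (- (- x - 2) - 2) with x by ring.
    destruct (Z.eqb_spec (-x-2) (-1)); try lia.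
    destruct (Nat.eqb l _); ring.
  - replace (Z.to_nat (-x-2)) with (Z.to_nat (-x-2)) by reflexivity.
    destruct (Z.eqb_spec x (-1)); try lia.
    destruct (Nat.eqb l _); ring.
  - destruct (Z.eqb_spec x (-1)), (Z.eqb_spec (-x-2) (-1)); try lia.
    subst x. simpl. destruct (Nat.eqb l _); ring.
Qed.

Definition Dn := D.
Definition En := E.
Lemma D_to_Dn y x l : y = x -> D y l = Dn x l.
Proof. intros ->; reflexivity. Qed.
Lemma D_to_Dn_refl y x l : y = -x-2 -> D y l = - Dn x l.
Proof. intros H. unfold Dn. apply D_refl. exact H. Qed.
Lemma E_to_En y x m : y = x -> E y m = En x m.
Proof. intros ->; reflexivity. Qed.
Lemma Dn_m1 (k1 k2 n c h : Z) l : Dn (0*k1+0*k2+0*n+0*c+0*h+ -1) l = 0.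
Proof. apply D_m1'. ring. Qed.

Definition pos_rep (a b e g q d : Z) : bool :=
  if negb (a =? 0) then 0 <? a else
  if negb (b =? 0) then 0 <? b else
  if negb (e =? 0) then 0 <? e else
  if negb (g =? 0) then 0 <? g else
  if negb (q =? 0) then 0 <? q else -1 <=? d.

Ltac canonD k1 k2 n c h :=
  match goal with
  | |- context[D ?x ?l] =>
    let F := lazymatch eval pattern k1, k2, n, c, h in x with ?F _ _ _ _ _ => F end in
    let d := eval cbv in (F 0 0 0 0 0) in
    let a := eval cbv in (F 1 0 0 0 0 - d) in
    let b := eval cbv in (F 0 1 0 0 0 - d) in
    let e := eval cbv in (F 0 0 1 0 0 - d) in
    let g := eval cbv in (F 0 0 0 1 0 - d) in
    let q := eval cbv in (F 0 0 0 0 1 - d) in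
    let pr := eval cbv in (pos_rep a b e g q d) in
    lazymatch pr with
    | true => rewrite (D_to_Dn x (a*k1+b*k2+e*n+g*c+q*h+d) l) by ring
    | false =>
      let a' := eval cbv in (- a) in
      let b' := eval cbv in (- b) in
      let e' := eval cbv in (- e) in
      let g' := eval cbv in (- g) in
      let q' := eval cbv in (- q) in
      let d' := eval cbv in (- d - 2) in
      rewrite (D_to_Dn_refl x (a'*k1+b'*k2+e'*n+g'*c+q'*h+d') l) by ring
    end
  | |- context[E ?x ?m] =>
    let F := lazymatch eval pattern k1, k2, n, c, h in x with ?F _ _ _ _ _ => F end in
    let d := eval cbv in (F 0 0 0 0 0) in
    let a := eval cbv in (F 1 0 0 0 0 - d) in
    let b := eval cbv in (F 0 1 0 0 0 - d) in
    let e := eval cbv in (F 0 0 1 0 0 - d) in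
    let g := eval cbv in (F 0 0 0 1 0 - d) in
    let q := eval cbv in (F 0 0 0 0 1 - d) in
    rewrite (E_to_En x (a*k1+b*k2+e*n+g*c+q*h+d) m) by ring
  end.

Ltac ptid k1 k2 n c h := intros l1 l2 l3 m;
  cbv beta delta [R12k R12 Fadd Fopp Fshift Fzero];
  rewrite ?term_eval; rewrite ?E_shift; repeat canonD k1 k2 n c h;
  rewrite ?Dn_m1; ring.

Lemma F1 (k1 k2 n c h : Z) : forall l1 l2 l3 m,
  Fadd (Fopp (Fshift 4 (R12k k1 (n-1) 1 (n-2) c)))
    (Fadd (Fopp (Fshift 2 (R12k k1 (n-1) 0 (n-1) (c+1))))
          (Fopp (Fshift 2 (R12k k1 (n-1) 0 (n-1) (c-1))))) l1 l2 l3 m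
  = R12k k1 (n-1) (-1) n c l1 l2 l3 m.
Proof. ptid k1 k2 n c h. Qed.

Lemma F1' (k1 k2 n c h : Z) : forall l1 l2 l3 m,
  Fadd (Fopp (Fshift 4 (R12k (n-1) k2 (n-2) 1 c)))
    (Fadd (Fopp (Fshift 2 (R12k (n-1) k2 (n-1) 0 (c+1))))
          (Fopp (Fshift 2 (R12k (n-1) k2 (n-1) 0 (c-1))))) l1 l2 l3 m
  = R12k (n-1) k2 n (-1) c l1 l2 l3 m.
Proof. ptid k1 k2 n c h. Qed.

Lemma F2 (k1 k2 n c h : Z) : forall l1 l2 l3 m,
  Fadd (Fopp (Fshift 4 (R12k k1 k2 1 (n-2) c)))
    (Fadd (Fopp (Fshift 2 (R12k k1 k2 0 (n-1) (c+1))))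
    (Fadd (Fopp (Fshift 2 (R12k k1 k2 0 (n-1) (c-1))))
     (Fshift (2*n-2*k2-2)
       (Fadd (Fshift 4 (R12k k1 k2 (k1-1) (n-k2) c))
       (Fadd (Fshift 2 (R12k k1 k2 k1 (n-k2-1) (c+1)))
       (Fadd (Fshift 2 (R12k k1 k2 k1 (n-k2-1) (c-1)))
             (R12k k1 k2 (k1+1) (n-k2-2) c))))))) l1 l2 l3 m
  = R12k k1 k2 (-1) n c l1 l2 l3 m.
Proof. ptid k1 k2 n c h. Qed.

Lemma F2' (k1 k2 n c h : Z) : forall l1 l2 l3 m,
  Fadd (Fopp (Fshift 4 (R12k k1 k2 (n-2) 1 c)))
    (Fadd (Fopp (Fshift 2 (R12k k1 k2 (n-1) 0 (c+1))))
    (Fadd (Fopp (Fshift 2 (R12k k1 k2 (n-1) 0 (c-1))))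
     (Fshift (2*n-2*k1-2)
       (Fadd (Fshift 4 (R12k k1 k2 (n-k1) (k2-1) c))
       (Fadd (Fshift 2 (R12k k1 k2 (n-k1-1) k2 (c+1)))
       (Fadd (Fshift 2 (R12k k1 k2 (n-k1-1) k2 (c-1)))
             (R12k k1 k2 (n-k1-2) (k2+1) c))))))) l1 l2 l3 m
  = R12k k1 k2 n (-1) c l1 l2 l3 m.
Proof. ptid k1 k2 n c h. Qed.

Lemma Fz (k1 k2 a b h : Z) : forall l1 l2 l3 m,
  Fzero l1 l2 l3 m = R12k k1 k2 a b (-1) l1 l2 l3 m.
Proof. ptid k1 k2 a b h. Qed.

Lemma Fanti (k1 k2 a b c : Z) : forall l1 l2 l3 m,
  Fopp (R12k k1 k2 (k1-a) (k2-b) c) l1 l2 l3 m = R12k k1 k2 a b c l1 l2 l3 m.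
Proof. ptid k1 k2 a b c. Qed.

Section Main.
Variables k1 k2 : Z.
Hypothesis hk1 : 1 <= k1.
Hypothesis hk2 : 1 <= k2.
Let S := J12 k1 k2 (fun n => 0 <= n) (fun n => 0 <= n).

Lemma gen0 a b c : 0 <= a -> 0 <= b -> 0 <= c -> S (R12k k1 k2 a b c).
Proof. intros; apply span_gen; exists a, b, c; auto. Qed.

Lemma genc a b c : 0 <= a -> 0 <= b -> -1 <= c -> S (R12k k1 k2 a b c).
Proof.
  intros Ha Hb Hc. destruct (Z.eq_dec c (-1)) as [->|].
  - apply (span_ext _ Fzero); [exact (Fz k1 k2 a b 0) | apply span_zero].
  - apply gen0; lia.
Qed.

Lemma genR a b c : ((0 <= a /\ 0 <= b) \/ (a <= k1 /\ b <= k2)) -> -1 <= c ->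
  S (R12k k1 k2 a b c).
Proof.
  intros [[Ha Hb]|[Ha Hb]] Hc; [now apply genc|].
  apply (span_ext _ _ _ (Fanti k1 k2 a b c)). apply span_opp, genc; lia.
Qed.

Ltac build := repeat match goal with
  | |- span _ (Fadd _ _) => apply span_add
  | |- span _ (Fopp _) => apply span_opp
  | |- span _ (Fshift _ _) => apply span_shift
  end.

Lemma main1 n c : 0 <= n -> 0 <= c -> S (R12k k1 k2 (-1) n c).
Proof.
  intros Hn Hc.
  destruct (Z_le_gt_dec n k2).
  - apply genR; lia.
  - destruct (Z.eq_dec n (k2+1)).
    + assert (E2 : k2 = n - 1) by lia.
      apply (span_ext _ (Fadd (Fopp (Fshift 4 (R12k k1 k2 1 (n-2) c)))
        (Fadd (Fopp (Fshift 2 (R12k k1 k2 0 (n-1) (c+1))))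
          (Fopp (Fshift 2 (R12k k1 k2 0 (n-1) (c-1))))))).
      { intros l1 l2 l3 m; rewrite E2; apply (F1 k1 k2 n c 0). }
      build; apply genR; lia.
    + apply (span_ext _ _ _ (F2 k1 k2 n c 0)).
      build; apply genR; lia.
Qed.
Lemma main2 n c : 0 <= n -> 0 <= c -> S (R12k k1 k2 n (-1) c).
Proof.
  intros Hn Hc.
  destruct (Z_le_gt_dec n k1).
  - apply genR; lia.
  - destruct (Z.eq_dec n (k1+1)).
    + assert (E2 : k1 = n - 1) by lia.
      apply (span_ext _ (Fadd (Fopp (Fshift 4 (R12k k1 k2 (n-2) 1 c)))
        (Fadd (Fopp (Fshift 2 (R12k k1 k2 (n-1) 0 (c+1))))
          (Fopp (Fshift 2 (R12k k1 k2 (n-1) 0 (c-1))))))).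
      { intros l1 l2 l3 m; rewrite E2; apply (F1' k1 k2 n c 0). }
      build; apply genR; lia.
    + apply (span_ext _ _ _ (F2' k1 k2 n c 0)).
      build; apply genR; lia.
Qed.
End Main.

Lemma span_mono (G1 G2 : F -> Prop) : (forall f, G1 f -> span G2 f) ->
  forall f, span G1 f -> span G2 f.
Proof.
  intros H f Hf; induction Hf.
  - auto.
  - apply span_zero.
  - apply span_add; auto.
  - apply span_opp; auto.
  - apply span_shift; auto.
  - eapply span_ext; eauto.
Qed.


Theorem lemma4p3 (k1 k2 : Z) : 1 <= k1 -> 1 <= k2 ->
  same_submodule (J12 k1 k2 (fun n => -1 <= n) (fun n => 0 <= n))
                 (J12 k1 k2 (fun n => 0 <= n) (fun n => 0 <= n)) /\
  same_submodule (J12 k1 k2 (fun n => 0 <= n) (fun n => -1 <= n))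
                 (J12 k1 k2 (fun n => 0 <= n) (fun n => 0 <= n)).
Proof.
  intros h1 h2; split; intro v; split; unfold J12; apply span_mono.
  - intros f (a & b & c & Ha & Hb & Hc & ->).
    destruct (Z.eq_dec a (-1)) as [->|].
    + now apply main1.
    + apply span_gen; exists a, b, c; repeat split; auto; lia.
  - intros f (a & b & c & Ha & Hb & Hc & ->).
    apply span_gen; exists a, b, c; repeat split; auto; lia.
  - intros f (a & b & c & Ha & Hb & Hc & ->).
    destruct (Z.eq_dec b (-1)) as [->|].
    + now apply main2.
    + apply span_gen; exists a, b, c; repeat split; auto; lia.
  - intros f (a & b & c & Ha & Hb & Hc & ->).
    apply span_gen; exists a, b, c; repeat split; auto; lia.
Qed.
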